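(* Let $H$ be a separable complex Hilbert space and $X$ a locally compact space with positive Borel measure $\mu$, and assume $F\subset J_1:=L^1(X,H)$, with norm $\|f\|_{J_1}=\int_X\|f(x)\|_H\,d\mu(x)$. Suppose the map $\sigma:F_0\to\overline{F}_0$ is continuous in the topology of $J_1$. Then the map $U:F_0\to U(H)$ is continuous from the topology of $J_1$ to the operator norm topology.
   Context: A frame on $H$ is a map $f:X\to H$ such that $x\mapsto\langle\phi,f(x)\rangle$ is measurable for every $\phi\in H$ and there exist $0<A\le B$ with $A\|\phi\|^2\le\int_X|\langle\phi,f(x)\rangle|^2d\mu(x)\le B\|\phi\|^2$ for all $\phi$; it is Parseval if $A=B=1$. $U(H)$ is the unitary group. $F$ is the set of frames $f$ with $\sup_x\|f(x)\|_H<\infty$, $F_0$ the Parseval ones; $(Af)(x)=A[f(x)]$. $\overline{F}_0\subset F_0$ is a fixed transversal of $F_0/U(H)$ (exactly one element from each orbit $\{Vf:V\in U(H)\}$); each $f\in F_0$ factors uniquely as $f=U(f)\sigma(f)$ with $U(f)\in U(H)$ and $\sigma(f)\in\overline{F}_0$, defining the maps $U$ and $\sigma$. *)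

(* Defs.v *)
From HB Require Import structures.
From mathcomp Require Import all_boot all_order all_algebra.
From mathcomp Require Import all_classical all_reals all_analysis.
From mathcomp Require Import complex.
Set Implicit Arguments. Unset Strict Implicit. Unset Printing Implicit Defensive.
Import Order.TTheory GRing.Theory Num.Theory.
Local Open Scope classical_set_scope.
Local Open Scope ring_scope.

Section Hilbert.
Variables (R : realType) (H : lmodType R[i]) (ip : H -> H -> R[i]).

Definition hnorm (x : H) : R := Num.sqrt (complex.Re (ip x x)).

Definition is_inner_product : Prop :=
  [/\ (forall (a : R[i]) (x y z : H), ip (a *: x + y) z = a * ip x z + ip y z),
      (forall x y : H, ip y x = (ip x y)^*),
      (forall x : H, 0 <= ip x x) &
      (forall x : H, ip x x = 0 -> x = 0)].

Definition hcomplete : Prop :=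
  forall u : nat -> H,
    (forall e : R, 0 < e -> exists N : nat, forall m n : nat,
        (N <= m)%N -> (N <= n)%N -> hnorm (u m - u n) < e) ->
    exists l : H, forall e : R, 0 < e -> exists N : nat, forall n : nat,
        (N <= n)%N -> hnorm (u n - l) < e.

Definition hseparable : Prop :=
  exists d : nat -> H, forall (x : H) (e : R), 0 < e ->
    exists n : nat, hnorm (x - d n) < e.

Definition separable_hilbert : Prop :=
  [/\ is_inner_product, hcomplete & hseparable].

Definition unitary (V : H -> H) : Prop :=
  [/\ (forall (a : R[i]) (x y : H), V (a *: x + y) = a *: V x + V y),
      (forall y : H, exists x : H, V x = y) &
      (forall x y : H, ip (V x) (V y) = ip x y)].

Definition opnorm (T : H -> H) : \bar R :=
  ereal_sup [set ((hnorm (T phi))%:E)%E | phi in [set phi | hnorm phi <= 1]].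

End Hilbert.

Section Frames.
Variables (R : realType) (H : lmodType R[i]) (ip : H -> H -> R[i]).
Variables (X : ptopologicalType)
  (mu : {measure set (g_sigma_algebraType (@open X)) -> \bar R}).

Local Notation XB := (g_sigma_algebraType (@open X)).

Definition weakly_measurable (f : X -> H) : Prop :=
  forall phi : H,
    measurable_fun [set: XB] (fun x : XB => complex.Re (ip phi (f x))) /\
    measurable_fun [set: XB] (fun x : XB => complex.Im (ip phi (f x))).

Definition frame_int (f : X -> H) (phi : H) : \bar R :=
  (\int[mu]_(x in [set: XB]) ((ComplexField.Normc.normc (ip phi (f x)) ^+ 2)%:E))%E.

Definition is_frame (f : X -> H) : Prop :=
  weakly_measurable f /\
  exists A B : R, [/\ 0 < A, A <= B &
    forall phi : H,
      ((A * hnorm ip phi ^+ 2)%:E <= frame_int f phi)%E /\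
      (frame_int f phi <= (B * hnorm ip phi ^+ 2)%:E)%E].

Definition is_parseval (f : X -> H) : Prop :=
  weakly_measurable f /\
  forall phi : H, frame_int f phi = ((hnorm ip phi ^+ 2)%:E)%E.

Definition Fset : set (X -> H) :=
  [set f | is_frame f /\ exists M : R, forall x : X, hnorm ip (f x) <= M].
Definition F0set : set (X -> H) :=
  [set f | is_parseval f /\ exists M : R, forall x : X, hnorm ip (f x) <= M].

Definition inJ1 (f : X -> H) : Prop :=
  measurable_fun [set: XB] (fun x : XB => hnorm ip (f x)) /\
  ((\int[mu]_(x in [set: XB]) (hnorm ip (f x))%:E) < +oo)%E.

Definition distJ1 (f g : X -> H) : \bar R :=
  (\int[mu]_(x in [set: XB]) (hnorm ip (f x - g x))%:E)%E.

Definition is_F0_transversal (Fb : set (X -> H)) : Prop :=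
  Fb `<=` F0set /\
  forall f, F0set f -> exists! g, Fb g /\ exists V, unitary ip V /\ f = V \o g.

Definition J1_continuous_on_F0 (s : (X -> H) -> (X -> H)) : Prop :=
  forall f, F0set f -> forall e : R, 0 < e -> exists2 d : R, 0 < d &
    forall g, F0set g -> (distJ1 f g < d%:E)%E -> (distJ1 (s f) (s g) < e%:E)%E.

Definition J1_opnorm_continuous_on_F0 (U : (X -> H) -> (H -> H)) : Prop :=
  forall f, F0set f -> forall e : R, 0 < e -> exists2 d : R, 0 < d &
    forall g, F0set g -> (distJ1 f g < d%:E)%E ->
      (opnorm ip (fun phi => (U f phi - U g phi)%R) < e%:E)%E.

End Frames.

(* Main.v *)
Require Import Defs.
From HB Require Import structures.
From mathcomp Require Import all_boot all_order all_algebra.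
From mathcomp Require Import all_classical all_reals all_analysis.
From mathcomp Require Import complex.
From mathcomp Require Import ring.
From mathcomp Require Import measurable_realfun.
Import Order.TTheory GRing.Theory Num.Theory.
Local Open Scope classical_set_scope.
Local Open Scope ring_scope.

Set Implicit Arguments. Unset Strict Implicit.
Local Open Scope complex_scope.
Local Open Scope ring_scope.
Section Alg.
Variables (R : realType) (H : lmodType R[i]) (ip : H -> H -> R[i]).
Hypothesis ipH : is_inner_product ip.

Lemma ip0l z : ip 0 z = 0.
Proof.
case: ipH => lin _ _ _.
have := lin 1 0 0 z; rewrite scaler0 addr0 mul1r => h.
by apply: (addrI (ip 0 z)); rewrite addr0 -h.
Qed.

Lemma ipDl x y z : ip (x + y) z = ip x z + ip y z.
Proof. by case: ipH => lin _ _ _; have := lin 1 x y z; rewrite scale1r mul1r. Qed.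

Lemma ipZl a x z : ip (a *: x) z = a * ip x z.
Proof. by case: ipH => lin _ _ _; have := lin a x 0 z; rewrite addr0 ip0l addr0. Qed.

Lemma ipNl x z : ip (- x) z = - ip x z.
Proof. by rewrite -scaleN1r ipZl mulN1r. Qed.

Lemma ipBl x y z : ip (x - y) z = ip x z - ip y z.
Proof. by rewrite ipDl ipNl. Qed.

Lemma ipC x y : ip y x = (ip x y)^*.
Proof. by case: ipH. Qed.

Lemma ipDr x y z : ip z (x + y) = ip z x + ip z y.
Proof. by rewrite ipC ipDl rmorphD /= -!ipC. Qed.

Lemma ipZr a x z : ip z (a *: x) = a^* * ip z x.
Proof. by rewrite ipC ipZl rmorphM /= -ipC. Qed.

Lemma ipBr x y z : ip z (x - y) = ip z x - ip z y.
Proof. by rewrite ipC ipBl rmorphB /= -!ipC. Qed.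

Lemma ip0r z : ip z 0 = 0.
Proof. by rewrite ipC ip0l rmorph0 /=. Qed.

Lemma ip_ge0 x : 0 <= ip x x.
Proof. by case: ipH. Qed.

Lemma ip_real x : (ip x x)^* = ip x x.
Proof. by apply: conj_Creal; apply: ger0_real; apply: ip_ge0. Qed.

Lemma CS a b : `|ip a b| ^+ 2 <= ip a a * ip b b.
Proof.
have [b0|bn0] := eqVneq (ip b b) 0.
  case: ipH => _ _ _ def; rewrite (def _ b0) ip0r normr0 expr0n /=.
  by rewrite mulr_ge0 // ip_ge0.
have bpos : 0 < ip b b by rewrite lt_def bn0 ip_ge0.
set c := ip a b.
pose t := c / ip b b.
have := ip_ge0 (a - t *: b).
rewrite ipBl !ipBr !ipZl !ipZr.
have -> : ip b a = c^* by rewrite /c -ipC.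
have -> : t^* = c^* / ip b b by rewrite /t rmorphM /= fmorphV /= ip_real.
rewrite -/c.
have -> : ip a a - c^* / ip b b * c - (t * c^* - t * (c^* / ip b b * ip b b))
   = ip a a - c * c^* / ip b b.
  by rewrite /t; field.
rewrite subr_ge0 normCK ler_pdivrMr //.
Qed.

Lemma ipE x : ip x x = (hnorm ip x ^+ 2)%:C.
Proof.
have := ip_ge0 x; rewrite /hnorm; case: (ip x x) => a b.
rewrite lecE /= => /andP[/eqP -> a0].
by rewrite sqr_sqrtr.
Qed.

Lemma hnorm_ge0 x : 0 <= hnorm ip x.
Proof. exact: sqrtr_ge0. Qed.

Lemma normcE (z : R[i]) : `|z| = (ComplexField.Normc.normc z)%:C.
Proof. by case: z. Qed.

Lemma normc_ge0 (z : R[i]) : 0 <= ComplexField.Normc.normc z.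
Proof. by case: z => a b; exact: sqrtr_ge0. Qed.

Lemma CSr a b : ComplexField.Normc.normc (ip a b) <= hnorm ip a * hnorm ip b.
Proof.
have := CS a b; rewrite !ipE normcE -!rmorphXn -rmorphM lecR -exprMn.
rewrite -ler_sqrt ?exprn_ge0 ?normc_ge0 ?mulr_ge0 ?hnorm_ge0 //.
by rewrite !sqrtr_sqr !ger0_norm ?normc_ge0 ?mulr_ge0 ?hnorm_ge0.
Qed.


Lemma normc_sqrt (z : R[i]) : ComplexField.Normc.normc z = Num.sqrt (complex.Re z ^+ 2 + complex.Im z ^+ 2).
Proof. by case: z. Qed.

Lemma normcB (u v : R[i]) : ComplexField.Normc.normc (u - v) <= ComplexField.Normc.normc u + ComplexField.Normc.normc v.
Proof.
by rewrite -lecR rmorphD /= -!normcE ler_normB.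
Qed.

Lemma hnormU V x : unitary ip V -> hnorm ip (V x) = hnorm ip x.
Proof. by case=> _ _ p; rewrite /hnorm p. Qed.

Lemma key_pt (Uf Ug : H -> H) (X : Type) (sf sg f g : X -> H) psi x M :
 unitary ip Uf -> unitary ip Ug -> f = Uf \o sf -> g = Ug \o sg -> hnorm ip (f x) <= M ->
 ComplexField.Normc.normc (ip (Uf psi - Ug psi) (f x)) ^+ 2 <=
   hnorm ip (Uf psi - Ug psi) * M *
   (ComplexField.Normc.normc (ip psi (sf x - sg x)) +
    ComplexField.Normc.normc (ip (Ug psi) (f x - g x))).
Proof.
move=> uf ug ef eg fM.
set v := Uf psi - Ug psi.
have e1 : ip v (f x) = ip psi (sf x - sg x) - ip (Ug psi) (f x - g x).
  rewrite /v ef eg /= ipBl !ipBr.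
  case: uf => _ _ ->; case: ug => _ _ ->.
  by ring.
rewrite expr2 ler_pM ?normc_ge0 //.
  apply: le_trans (CSr _ _) _.
  by rewrite ler_wpM2l ?hnorm_ge0.
by rewrite e1 normcB.
Qed.

End Alg.

Lemma ReB (R : realType) (u v : R[i]) : complex.Re (u - v) = complex.Re u - complex.Re v.
Proof. by case: u; case: v. Qed.
Lemma ImB (R : realType) (u v : R[i]) : complex.Im (u - v) = complex.Im u - complex.Im v.
Proof. by case: u; case: v. Qed.

Lemma meas_norm2 d (T : measurableType d) (R : realType) (p q : T -> R) :
  measurable_fun setT p -> measurable_fun setT q ->
  measurable_fun setT (fun x => Num.sqrt (p x ^+ 2 + q x ^+ 2)).
Proof.
move=> mp mq.
have h : measurable_fun setT (fun x => p x ^+ 2 + q x ^+ 2).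
  by apply: measurable_funD; apply: measurable_funX.
exact: (measurableT_comp (continuous_measurable_fun (@sqrt_continuous R)) h).
Qed.

Lemma mono_int d (T : measurableType d) (R : realType) (mu : {measure set T -> \bar R})
  (f1 f2 : T -> \bar R) : (forall x, (0 <= f1 x)%E) -> (forall x, (f1 x <= f2 x)%E) ->
  (\int[mu]_(x in [set: T]) f1 x <= \int[mu]_(x in [set: T]) f2 x)%E.
Proof.
move=> f10 f12.
have f20 x : (0 <= f2 x)%E by exact: le_trans (f10 x) (f12 x).
rewrite !ge0_integralTE//; apply: ereal_sup_le => _ [h hf <-]; exists h => //=.
by move=> x; exact: le_trans (hf x) (f12 x).
Qed.

Unset Implicit Arguments.

Theorem mainTheorem18 (R : realType) (H : lmodType R[i]) (ip : H -> H -> R[i])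
  (X : ptopologicalType)
  (mu : {measure set (g_sigma_algebraType (@open X)) -> \bar R})
  (Fb : set (X -> H))
  (U : (X -> H) -> (H -> H)) (sigma : (X -> H) -> (X -> H)) :
  separable_hilbert ip ->
  locally_compact [set: X] ->
  (forall f, Fset ip mu f -> inJ1 ip mu f) ->
  is_F0_transversal ip mu Fb ->
  (forall f, F0set ip mu f ->
     [/\ unitary ip (U f), Fb (sigma f) & f = U f \o sigma f]) ->
  J1_continuous_on_F0 ip mu sigma ->
  J1_opnorm_continuous_on_F0 ip mu U.
Proof.
move=> [ipH _ _] _ _ [FbF0 _] hU sig_cont.
move=> f f0 e e0.
have [uf Fsf ef] := hU f f0.
have [[wmf pf] [M fM]] := f0.
pose M1 := Num.max M 1.
have M1pos : 0 < M1 by rewrite lt_max ltr01 orbT.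
have fM1 x : hnorm ip (f x) <= M1 by rewrite le_max fM.
pose del := e / (4 * M1).
have delpos : 0 < del by rewrite divr_gt0 // mulr_gt0.
have [d1 d1pos hd1] := sig_cont f f0 del delpos.
exists (Num.min d1 del); first by rewrite lt_min d1pos delpos.
move=> g g0 dfg.
have [ug Fsg eg] := hU g g0.
have dfg1 : (distJ1 ip mu f g < d1%:E)%E.
  by apply: lt_le_trans dfg _; rewrite lee_fin ge_min lexx.
have dfg2 : (distJ1 ip mu f g < del%:E)%E.
  by apply: lt_le_trans dfg _; rewrite lee_fin ge_min lexx orbT.
have ds := hd1 g g0 dfg1.
have [[wsf _] _] := FbF0 _ Fsf.
have [[wsg _] _] := FbF0 _ Fsg.
have [[wg _] _] := g0.
have bound : forall psi, hnorm ip psi <= 1 -> hnorm ip (U f psi - U g psi) <= e / 2.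
  move=> psi psi1.
  set v := U f psi - U g psi.
  pose a x := ComplexField.Normc.normc (ip psi (sigma f x - sigma g x)).
  pose b x := ComplexField.Normc.normc (ip (U g psi) (f x - g x)).
  have ma : measurable_fun [set: g_sigma_algebraType (@open X)] (fun x => (a x)%:E).
    apply/measurable_EFinP.
    have -> : a = (fun x => Num.sqrt ((complex.Re (ip psi (sigma f x)) - complex.Re (ip psi (sigma g x))) ^+ 2 + (complex.Im (ip psi (sigma f x)) - complex.Im (ip psi (sigma g x))) ^+ 2)).
      by apply/funext => x; rewrite /a normc_sqrt (ipBr ipH) ReB ImB.
    by apply: meas_norm2; apply: measurable_funB; [exact: (wsf psi).1|exact: (wsg psi).1|exact: (wsf psi).2|exact: (wsg psi).2].
  have mb : measurable_fun [set: g_sigma_algebraType (@open X)] (fun x => (b x)%:E).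
    apply/measurable_EFinP.
    have -> : b = (fun x => Num.sqrt ((complex.Re (ip (U g psi) (f x)) - complex.Re (ip (U g psi) (g x))) ^+ 2 + (complex.Im (ip (U g psi) (f x)) - complex.Im (ip (U g psi) (g x))) ^+ 2)).
      by apply/funext => x; rewrite /b normc_sqrt (ipBr ipH) ReB ImB.
    by apply: meas_norm2; apply: measurable_funB; [exact: (wmf _).1|exact: (wg _).1|exact: (wmf _).2|exact: (wg _).2].
  have ia : (\int[mu]_(x in [set: g_sigma_algebraType (@open X)]) (a x)%:E <= del%:E)%E.
    apply: le_trans (ltW ds).
    apply: mono_int => x; rewrite lee_fin ?normc_ge0 //.
    apply: le_trans (CSr ipH _ _) _.
    by rewrite -[leRHS]mul1r ler_wpM2r ?hnorm_ge0.
  have ib : (\int[mu]_(x in [set: g_sigma_algebraType (@open X)]) (b x)%:E <= del%:E)%E.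
    apply: le_trans (ltW dfg2).
    apply: mono_int => x; rewrite lee_fin ?normc_ge0 //.
    apply: le_trans (CSr ipH _ _) _.
    by rewrite (hnormU _ ug) -[leRHS]mul1r ler_wpM2r ?hnorm_ge0.
  have K0 : 0 <= hnorm ip v * M1 by rewrite mulr_ge0 ?hnorm_ge0 ?ltW.
  have chain : ((hnorm ip v ^+ 2)%:E <= (hnorm ip v * M1)%:E * (del%:E + del%:E))%E.
    rewrite -(pf v) /frame_int.
    apply: (@le_trans _ _ (\int[mu]_(x in [set: g_sigma_algebraType (@open X)]) ((hnorm ip v * M1)%:E * ((a x)%:E + (b x)%:E)))%E).
      apply: mono_int => x; first by rewrite lee_fin exprn_ge0 ?normc_ge0.
      rewrite -EFinD -EFinM lee_fin.
      exact: (key_pt ipH psi uf ug ef eg (fM1 x)).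
    rewrite ge0_integralZl_EFin //; last first.
      - by apply: emeasurable_funD.
      - by move=> x _; rewrite adde_ge0 // lee_fin normc_ge0.
    rewrite ge0_integralD //; last first.
      - by move=> x _; rewrite lee_fin normc_ge0.
      - by move=> x _; rewrite lee_fin normc_ge0.
    by apply: lee_wpmul2l; [rewrite lee_fin | exact: leeD].
  move: chain; rewrite -EFinD -EFinM lee_fin => chain.
  have eq2 : M1 * (del + del) = e / 2.
    rewrite /del; field.
    by rewrite (gt_eqF M1pos).
  have [hv0|hvpos] := eqVneq (hnorm ip v) 0.
    by rewrite hv0 divr_ge0 // ltW.
  have hvp : 0 < hnorm ip v by rewrite lt_def hvpos hnorm_ge0.
  rewrite -eq2 -(ler_pM2l hvp) -expr2 mulrA.
  exact: chain.
apply: (@le_lt_trans _ _ (e / 2)%:E).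
  apply: ge_ereal_sup => _ [psi /= psi1 <-]; rewrite lee_fin; exact: bound.
by rewrite lte_fin ltr_pdivrMr // ltr_pMr // ltr1n.
Qed.
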